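(* Let $\lambda$ be a partition with $|\lambda| = k$. Then for all $n \in \mathbb{N}$ (with $\mathbb{N}=\{0,1,2,\dots\}$), \[ \frac{1}{\# \mathcal{OT}(\lambda,k+2n)\cdot(2n+k+1)} \sum_{T \in \mathcal{OT}(\lambda,k+2n)} \mathrm{wt}(T) = \frac{n}{3} + \frac{k}{2}.\]
   Context: Young's lattice is the poset of all integer partitions ordered by inclusion of Young diagrams; write $\mu \lessdot \lambda$ if the Young diagram of $\lambda$ is obtained from that of $\mu$ by adding one box. $|\lambda|$ denotes the size (number of boxes) of $\lambda$. A walk in Young's lattice is a sequence of partitions $(\lambda^{0},\lambda^{1},\ldots,\lambda^{l})$ such that for each $1\le i\le l$ either $\lambda^{i-1}\lessdot\lambda^{i}$ or $\lambda^{i}\lessdot\lambda^{i-1}$. An oscillating tableau of shape $\lambda$ and length $l$ is such a walk with $\lambda^{0}=\emptyset$ (the empty partition) and $\lambda^{l}=\lambda$; $\mathcal{OT}(\lambda,l)$ denotes the set of all of them. The weight of $T=(\lambda^{0},\ldots,\lambda^{l})$ is $\mathrm{wt}(T) := \sum_{i=0}^{l}|\lambda^{i}|$. *)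

(* Defs.v *)
From HB Require Import structures.
From mathcomp Require Import all_boot all_order all_algebra.
Set Implicit Arguments. Unset Strict Implicit. Unset Printing Implicit Defensive.

Definition is_part (l : seq nat) : bool :=
  sorted geq l && all (fun x => 0 < x) l.

Definition psize (l : seq nat) : nat := sumn l.

Definition cover (mu lam : seq nat) : bool :=
  [&& is_part mu, is_part lam &
      has (fun i => incr_nth mu i == lam) (iota 0 (size mu).+1)].

Definition ystep (mu lam : seq nat) : bool := cover mu lam || cover lam mu.

Definition is_OT (lam : seq nat) (l : nat) (T : seq (seq nat)) : bool :=
  match T with
  | [::] => false
  | x :: s => [&& x == [::], size s == l, path ystep x s & last x s == lam]
  end.

Definition wt (T : seq (seq nat)) : nat := sumn (map psize T).

(* Main.v *)
Require Import Defs.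
From mathcomp Require Import all_boot all_order all_algebra.
From mathcomp Require Import zify ring lra.
Require Import Defs.
Set Implicit Arguments. Unset Strict Implicit. Unset Printing Implicit Defensive.

Notation nt s i := (nth 0%N s i).

Lemma npos_nth (s : seq nat) j : all (fun x => 0 < x) s -> (0 < nt s j) = (j < size s).
Proof.
move=> /allP H; case: (ltnP j (size s)) => hj.
  by apply: H; apply: mem_nth.
by rewrite nth_default.
Qed.

Lemma part_pos s : is_part s -> all (fun x => 0 < x) s.
Proof. by case/andP. Qed.

Lemma part_eq a b : is_part a -> is_part b -> (forall j, nt a j = nt b j) -> a = b.
Proof.
move=> /part_pos pa /part_pos pb H.
have Hs : size a = size b.
  case: (ltngtP (size a) (size b)) => // h.
    have := npos_nth (size a) pb; have := npos_nth (size a) pa.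
    by rewrite H h ltnn => ->.
  have := npos_nth (size b) pb; have := npos_nth (size b) pa.
  by rewrite H h ltnn => ->.
by apply: (eq_from_nth (x0 := 0)) => // i _; apply: H.
Qed.

Lemma part_dec s j : is_part s -> nt s j.+1 <= nt s j.
Proof.
case/andP => /(sortedP 0) H _.
case: (ltnP j.+1 (size s)) => h; first exact: H.
by rewrite (nth_default _ h).
Qed.

Lemma part_mono s i j : is_part s -> i <= j -> nt s j <= nt s i.
Proof.
move=> ps; elim: j => [|j IH]; first by rewrite leqn0 => /eqP ->.
rewrite leq_eqVlt => /orP [/eqP -> //| h].
exact: leq_trans (part_dec j ps) (IH h).
Qed.

Lemma part_of s : (forall j, j < size s -> 0 < nt s j) -> (forall j, nt s j.+1 <= nt s j) -> is_part s.
Proof.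
move=> Hp Hd; apply/andP; split.
  by apply/(sortedP 0) => i _; apply: Hd.
by apply/(all_nthP 0) => i /Hp.
Qed.

Lemma sumn_incr_nth s i : sumn (incr_nth s i) = (sumn s).+1.
Proof.
elim: s i => [|x s IH] [|i] //=.
  by elim: i => //= i ->.
by rewrite IH addnS.
Qed.

Lemma cover_fun mu nu : cover mu nu <->
  [/\ is_part mu, is_part nu & exists i : nat, forall k, nt nu k = nt mu k + (k == i)].
Proof.
split.
  case/and3P => pm pn /hasP [i _ /eqP Hnu]; subst nu; split => //.
  exists i => k; by rewrite nth_incr_nth addnC eq_sym.
case=> pm pn [i Hi]; apply/and3P; split => //.
have hi : i <= size mu.
  rewrite leqNgt; apply/negP => h.
  have := part_mono pn (ltnW h); rewrite !Hi eqxx (nth_default _ (leqnn _)).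
  by rewrite (nth_default _ (ltnW h)) (ltn_eqF h).
apply/hasP; exists i; first by rewrite mem_iota.
apply/eqP/part_eq => //.
  apply: part_of => [j|j]; rewrite !nth_incr_nth.
    rewrite size_incr_nth; case: ifP => hs hj.
      by rewrite addn_gt0 (npos_nth _ (part_pos pm)) hj orbT.
    have [_|hij] := eqVneq i j; first by [].
    rewrite addn_gt0 (npos_nth _ (part_pos pm)); apply/orP; right; lia.
  have := part_dec j pm; have := part_dec j (pn).
  rewrite !Hi; case: (i =P j.+1); case: (i =P j); lia.
by move=> j; rewrite nth_incr_nth Hi addnC eq_sym.
Qed.

Definition addable (mu : seq nat) i := (i == 0) || (nt mu i < nt mu i.-1).
Definition removable (mu : seq nat) i := nt mu i.+1 < nt mu i.
Definition dec (mu : seq nat) i :=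
  [seq x <- mkseq (fun j => nt mu j - (j == i)) (size mu) | x != 0].

Definition ups mu := if is_part mu then
  [seq incr_nth mu i | i <- iota 0 (size mu).+1 & addable mu i] else [::].
Definition downs mu := if is_part mu then
  [seq dec mu i | i <- iota 0 (size mu) & removable mu i] else [::].

Lemma mkseqS' (f : nat -> nat) n : mkseq f n.+1 = f 0 :: mkseq (fun j => f j.+1) n.
Proof.
rewrite /mkseq /= -[1]addn0 iotaDl -map_comp; congr (_ :: _); apply: eq_map => j /=; rewrite add1n.
Qed.

Lemma nth_filter_mkseq n : forall f : nat -> nat,
  (forall j, f j.+1 <= f j) -> (forall j, n <= j -> f j = 0) ->
  forall j, nt [seq x <- mkseq f n | x != 0] j = f j.
Proof.
elim: n => [|n IH] f Hd Hz j.
  by rewrite /= nth_nil Hz.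
have mono : forall a b, a <= b -> f b <= f a.
  move=> a; elim=> [|b IHb]; first by rewrite leqn0 => /eqP ->.
  rewrite leq_eqVlt => /orP [/eqP -> //|h].
  exact: leq_trans (Hd b) (IHb h).
rewrite mkseqS' /=.
case: (posnP (f 0)) => [h0|hp].
  have Z : forall b, f b = 0 by move=> b; apply/eqP; rewrite -leqn0 -h0 mono.
  rewrite /=.
  have -> : [seq x <- mkseq (fun j => f j.+1) n | x != 0] = [::].
    apply/eqP; rewrite -[_ == _]negbK -has_filter; apply/hasPn => x /mapP [y _ ->].
    by rewrite Z.
  by rewrite nth_nil Z.
rewrite /=; case: j => [|j] //=.
apply: IH => [k|k hk]; first exact: Hd.
by apply: Hz.
Qed.

Lemma dec_nth mu i j : is_part mu -> removable mu i ->
  nt (dec mu i) j = nt mu j - (j == i).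
Proof.
move=> pm hr; apply: nth_filter_mkseq => [k|k hk].
  have := part_dec k pm; move: hr; rewrite /removable.
  case: (k =P i) => [->|]; case: (k.+1 =P i) => //=; try lia.
by rewrite nth_default.
Qed.

Lemma dec_cover mu i : is_part mu -> removable mu i -> i < size mu -> cover (dec mu i) mu.
Proof.
move=> pm hr hi; apply/cover_fun; split => //.
  apply: part_of => [j hj|j].
    have := mem_nth 0 hj; rewrite mem_filter => /andP [].
    by rewrite lt0n.
  rewrite !dec_nth //.
  have := part_dec j pm; move: hr; rewrite /removable.
  case: (j =P i) => [->|]; case: (j.+1 =P i) => //=; try lia.
exists i => k; rewrite dec_nth //.
have := npos_nth i (part_pos pm); rewrite hi.
case: (k =P i) => [->|] /=; lia.
Qed.

Lemma mem_ups mu nu : (nu \in ups mu) = cover mu nu.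
Proof.
rewrite /ups; case: ifP => pm; last first.
  by rewrite in_nil; apply/esym/negbTE; apply/negP => /and3P [h]; rewrite pm in h.
apply/idP/idP.
  case/mapP => i; rewrite mem_filter mem_iota add0n => /andP [ha hi] ->.
  apply/cover_fun; split => //; last first.
    by exists i => k; rewrite nth_incr_nth addnC eq_sym.
  apply: part_of => [j|j]; rewrite !nth_incr_nth.
    rewrite size_incr_nth; case: ifP => hs hj.
      by rewrite addn_gt0 (npos_nth _ (part_pos pm)) hj orbT.
    have [_|hij] := eqVneq i j; first by [].
    rewrite addn_gt0 (npos_nth _ (part_pos pm)); apply/orP; right; lia.
  have := part_dec j pm; move: ha; rewrite /addable.
  case: (i =P j.+1) => [->|]; case: (i =P j) => //=; lia.
case/and3P => _ pn /hasP [i]; rewrite mem_iota add0n => hi /eqP Hn.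
apply/mapP; exists i => //; rewrite mem_filter mem_iota add0n hi andbT.
rewrite /addable; case: i hi Hn => [|i] //= hi Hn.
have := part_dec i pn; rewrite -Hn !nth_incr_nth eqxx.
case: (i.+1 =P i) => //=; lia.
Qed.

Lemma mem_downs mu rho : (rho \in downs mu) = cover rho mu.
Proof.
rewrite /downs; case: ifP => pm; last first.
  by rewrite in_nil; apply/esym/negbTE; apply/negP => /and3P [_ h]; rewrite pm in h.
apply/idP/idP.
  case/mapP => i; rewrite mem_filter mem_iota add0n => /andP [hr hi] ->.
  exact: dec_cover.
move=> hc; have := hc; case/cover_fun => pr _ [i Hi].
have hi : i < size mu.
  by rewrite -(npos_nth _ (part_pos pm)) Hi eqxx addn1.
have hr : removable mu i.
  rewrite /removable !Hi eqxx; have := part_dec i pr.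
  case: (i.+1 =P i) => //=; lia.
apply/mapP; exists i; first by rewrite mem_filter mem_iota add0n hi hr.
have [pd _ _] := (cover_fun (dec mu i) mu).1 (dec_cover pm hr hi).
apply: part_eq => // k; rewrite dec_nth // Hi; lia.
Qed.

Lemma uniq_ups mu : uniq (ups mu).
Proof.
rewrite /ups; case: ifP => // _.
rewrite map_inj_uniq ?filter_uniq ?iota_uniq //; exact: incr_nth_inj.
Qed.

Lemma uniq_downs mu : uniq (downs mu).
Proof.
rewrite /downs; case: ifP => // pm.
rewrite map_inj_in_uniq ?filter_uniq ?iota_uniq // => i i'.
rewrite !mem_filter !mem_iota !add0n => /andP [hr /andP [_ hi]] /andP [hr' hi'] E.
have := dec_nth i pm hr; rewrite E dec_nth // eqxx.
have := npos_nth i (part_pos pm); rewrite hi.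
case: (i =P i') => // _; lia.
Qed.

Lemma size_ups mu : is_part mu -> size (ups mu) = (size (downs mu)).+1.
Proof.
move=> pm; rewrite /ups /downs pm !size_map !size_filter.
rewrite -[(size mu).+1]add1n iotaD /= add0n.
rewrite (_ : iota 1 (size mu) = map (addn 1) (iota 0 (size mu))); last by rewrite -iotaDl.
rewrite count_map add1n.
by congr S; apply: eq_count.
Qed.

Lemma psize_cover mu nu : cover mu nu -> psize nu = (psize mu).+1.
Proof. by case/and3P => _ _ /hasP [i _ /eqP <-]; rewrite /psize sumn_incr_nth. Qed.

Lemma cover_partl mu nu : cover mu nu -> is_part mu.
Proof. by case/and3P. Qed.
Lemma cover_partr mu nu : cover mu nu -> is_part nu.
Proof. by case/and3P. Qed.

Lemma ups_incr mu b : is_part mu -> addable mu b -> b <= size mu -> cover mu (incr_nth mu b).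
Proof.
move=> pm ha hb; rewrite -mem_ups /ups pm; apply/map_f.
by rewrite mem_filter mem_iota add0n ha ltnS hb.
Qed.

Lemma diamond1 mu tau nu : tau != mu -> cover mu nu -> cover tau nu ->
  exists rho, cover rho mu /\ cover rho tau.
Proof.
move=> ntm /cover_fun [pm pn [i Hi]] /cover_fun [pt _ [j Hj]].
have Hk : forall k, nt mu k + (k == i) = nt tau k + (k == j).
  by move=> k; rewrite -Hi -Hj.
have hij : i != j.
  apply/negP => /eqP eij; subst j; move/negP: ntm; apply; apply/eqP.
  apply: part_eq => // k; have := Hk k; lia.
have e1 := Hk j; have e2 := Hk j.+1; have e3 := part_dec j pt.
have hr : removable mu j by rewrite /removable; lia.
have hj : j < size mu by rewrite -(npos_nth _ (part_pos pm)); lia.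
have cr := dec_cover pm hr hj.
exists (dec mu j); split => //.
have [pr _ _] := (cover_fun _ _).1 cr.
apply/cover_fun; split => //; exists i => k; rewrite dec_nth //.
have := Hk k; lia.
Qed.

Lemma diamond2 mu tau rho : tau != mu -> cover rho mu -> cover rho tau ->
  exists nu, cover mu nu /\ cover tau nu.
Proof.
move=> ntm /cover_fun [pr pm [a Ha]] /cover_fun [_ pt [b Hb]].
have hab : a != b.
  apply/negP => /eqP eab; subst b; move/negP: ntm; apply; apply/eqP.
  apply: part_eq => // k; rewrite Ha Hb //.
have ha : addable mu b.
  rewrite /addable; case: b Hb hab => [|b] Hb hab //=.
  have := Ha b.+1; have := Ha b; have := Hb b; have := Hb b.+1; have := part_dec b pt.
  lia.
have hb : b <= size mu.
  case: b Hb hab ha => [|b] Hb hab ha //.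
  rewrite -(npos_nth _ (part_pos pm)).
  have := Ha b; have := Hb b; have := Hb b.+1; have := part_dec b pt; lia.
have cn := ups_incr pm ha hb.
exists (incr_nth mu b); split => //.
apply/cover_fun; split => //; first exact: cover_partr cn.
exists a => k; rewrite nth_incr_nth Ha Hb; lia.
Qed.

Lemma uniqUD mu tau nu1 nu2 : tau != mu -> cover mu nu1 -> cover tau nu1 ->
  cover mu nu2 -> cover tau nu2 -> nu1 = nu2.
Proof.
move=> ntm /cover_fun [pm p1 [i1 Hi1]] /cover_fun [pt _ [j1 Hj1]]
  /cover_fun [_ p2 [i2 Hi2]] /cover_fun [_ _ [j2 Hj2]].
have hij : i1 != j1.
  apply/negP => /eqP eij; subst j1; move/negP: ntm; apply; apply/eqP.
  apply: part_eq => // k; have := Hi1 k; have := Hj1 k; lia.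
have e : i1 = i2.
  have := Hi1 i1; have := Hj1 i1; have := Hi2 i1; have := Hj2 i1; lia.
subst i2; apply: part_eq => // k; rewrite Hi1 Hi2 //.
Qed.

Lemma uniqDU mu tau rho1 rho2 : tau != mu -> cover rho1 mu -> cover rho1 tau ->
  cover rho2 mu -> cover rho2 tau -> rho1 = rho2.
Proof.
move=> ntm /cover_fun [p1 pm [a1 Ha1]] /cover_fun [_ pt [b1 Hb1]]
  /cover_fun [p2 _ [a2 Ha2]] /cover_fun [_ _ [b2 Hb2]].
have hab : a1 != b1.
  apply/negP => /eqP eab; subst b1; move/negP: ntm; apply; apply/eqP.
  apply: part_eq => // k; rewrite Ha1 Hb1 //.
have e : a1 = a2.
  have := Ha1 a1; have := Hb1 a1; have := Ha2 a1; have := Hb2 a1; lia.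
subst a2; apply: part_eq => // k; have := Ha1 k; have := Ha2 k; lia.
Qed.

Lemma count_has_uniq (T : eqType) (P : pred T) s : uniq s ->
  {in s &, forall x y, P x -> P y -> x = y} -> count P s = has P s.
Proof.
elim: s => [|x s IH] //= /andP [nx us] H.
rewrite IH //; last by move=> a b ha hb; apply: H; rewrite inE ?ha ?hb orbT.
case: (boolP (P x)) => px //=.
suff -> : has P s = false by [].
apply/negbTE/hasPn => y ys; apply/negP => py.
have := H x y; rewrite !inE eqxx ys orbT => /(_ isT isT px py) exy.
by move: nx; rewrite exy ys.
Qed.

Definition UD mu := flatten (map downs (ups mu)).
Definition DU mu := flatten (map ups (downs mu)).

Lemma count_UD mu x : count_mem x (UD mu) = count (fun nu => x \in downs nu) (ups mu).
Proof.
rewrite /UD count_flatten -map_comp -sumn_count; congr sumn; apply: eq_map => nu /=.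
by rewrite count_uniq_mem ?uniq_downs.
Qed.

Lemma count_DU mu x : count_mem x (DU mu) = count (fun nu => x \in ups nu) (downs mu).
Proof.
rewrite /DU count_flatten -map_comp -sumn_count; congr sumn; apply: eq_map => nu /=.
by rewrite count_uniq_mem ?uniq_ups.
Qed.

Lemma perm_UD mu : perm_eq [seq t <- UD mu | t != mu] [seq t <- DU mu | t != mu].
Proof.
apply/allP => x _ /=; apply/eqP; rewrite !count_filter.
case: (x =P mu) => [->|/eqP nxm].
  by rewrite !(@eq_count _ _ pred0) ?count_pred0 // => y /=; case: (y =P mu) => // ->; rewrite eqxx.
rewrite !(@eq_count _ _ (pred1 x)); last first.
  by move=> y /=; case: (y =P x) => // ->; rewrite nxm.
  by move=> y /=; case: (y =P x) => // ->; rewrite nxm.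
rewrite count_UD count_DU !count_has_uniq ?uniq_ups ?uniq_downs //; last first.
  move=> r1 r2; rewrite !mem_downs !mem_ups => h1 h2 h3 h4.
  exact: (uniqUD nxm h1 h3 h2 h4).
  move=> r1 r2; rewrite !mem_downs !mem_ups => h1 h2 h3 h4.
  exact: (uniqDU nxm h1 h3 h2 h4).
congr (nat_of_bool _); apply/idP/idP.
  case/hasP => nu; rewrite mem_ups mem_downs => h1 h2.
  have [rho [c1 c2]] := diamond1 nxm h1 h2.
  by apply/hasP; exists rho; rewrite ?mem_downs ?mem_ups.
case/hasP => rho; rewrite mem_downs mem_ups => h1 h2.
have [nu [c1 c2]] := diamond2 nxm h1 h2.
by apply/hasP; exists nu; rewrite ?mem_downs ?mem_ups.
Qed.

Fixpoint gn (s : nat) (mu : seq nat) : nat :=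
  if s is s'.+1 then \sum_(rho <- downs mu) gn s' rho else 1.
Definition g mu := gn (psize mu) mu.

Lemma part_psize0 mu : is_part mu -> psize mu = 0 -> mu = [::].
Proof.
case: mu => [|x s] // /andP [_ /= /andP [hx _]]; rewrite /psize /=; lia.
Qed.

Lemma downs_nil : downs [::] = [::].
Proof. by []. Qed.

Lemma sum_const_cond (T : eqType) (s : seq T) (P : pred T) c :
  \sum_(t <- s | P t) c = count P s * c.
Proof. by rewrite big_const_seq iter_addn_0 mulnC. Qed.

Lemma G1 mu : is_part mu -> \sum_(rho <- downs mu) g rho = (0 < psize mu) * g mu.
Proof.
move=> pm; case E: (psize mu) => [|s].
  by rewrite (part_psize0 pm E) downs_nil big_nil.
rewrite mul1n /g E /= big_seq [RHS]big_seq; apply: eq_bigr => rho.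
rewrite mem_downs => /psize_cover; rewrite E => -[->] //.
Qed.

Lemma sum_eq_cond (s : seq (seq nat)) mu (F : seq nat -> nat) :
  \sum_(t <- s | t == mu) F t = count_mem mu s * F mu.
Proof.
rewrite -sum_const_cond; apply: eq_bigr => t /eqP -> //.
Qed.

Lemma G2 n : forall mu, psize mu < n -> is_part mu ->
  \sum_(nu <- ups mu) g nu = (psize mu).+1 * g mu.
Proof.
elim: n => [|n IH] mu // hn pm.
have A1 : \sum_(nu <- ups mu) g nu = \sum_(t <- UD mu) g t.
  rewrite /UD big_flatten big_map big_seq [RHS]big_seq; apply: eq_bigr => nu.
  rewrite mem_ups => c; rewrite G1 ?(cover_partr c) // (psize_cover c) mul1n //.
have A2 : \sum_(rho <- downs mu) \sum_(t <- ups rho) g t = psize mu * g mu.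
  transitivity (\sum_(rho <- downs mu) psize mu * g rho).
    rewrite big_seq [RHS]big_seq; apply: eq_bigr => rho.
    rewrite mem_downs => c; rewrite IH ?(cover_partl c) ?(psize_cover c) //.
    by have := psize_cover c; lia.
  rewrite -big_distrr /= G1 //; case: (posnP (psize mu)) => [->|] //=.
  by rewrite mul1n.
have A3 : \sum_(rho <- downs mu) \sum_(t <- ups rho) g t = \sum_(t <- DU mu) g t.
  by rewrite /DU big_flatten big_map.
have cU : count_mem mu (UD mu) = size (ups mu).
  rewrite count_UD -[RHS]count_predT; apply: eq_in_count => nu.
  by rewrite mem_ups mem_downs.
have cD : count_mem mu (DU mu) = size (downs mu).
  rewrite count_DU -[RHS]count_predT; apply: eq_in_count => nu.
  by rewrite mem_ups mem_downs.
have S : \sum_(t <- UD mu | t != mu) g t = \sum_(t <- DU mu | t != mu) g t.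
  by rewrite -!(big_filter _ (fun t => t != mu)); apply: perm_big; apply: perm_UD.
move: A2; rewrite A3 (bigID (fun t => t == mu)) /= sum_eq_cond cD => A2.
rewrite A1 (bigID (fun t => t == mu)) /= sum_eq_cond cU S size_ups //.
lia.
Qed.

Lemma Gups mu : is_part mu -> \sum_(nu <- ups mu) g nu = (psize mu).+1 * g mu.
Proof. by apply: (@G2 (psize mu).+1). Qed.

Lemma gpos n : forall mu, psize mu < n -> is_part mu -> 0 < g mu.
Proof.
elim: n => [|n IH] mu // hn pm.
case E: (psize mu) => [|s]; first by rewrite /g E.
have hs : 0 < size mu by case: mu pm E hn.
have hr : removable mu (size mu).-1.
  rewrite /removable prednK // nth_default // (npos_nth _ (part_pos pm)).
  by rewrite prednK.
have hl : (size mu).-1 < size mu by rewrite ltn_predL.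
have c := dec_cover pm hr hl.
have hm : dec mu (size mu).-1 \in downs mu by rewrite mem_downs.
have := G1 pm; rewrite E mul1n => <-.
rewrite (bigD1_seq _ hm (uniq_downs mu)) /= addn_gt0 IH //.
  by have := psize_cover c; lia.
exact: cover_partl c.
Qed.

Definition nbrs mu := downs mu ++ ups mu.

Lemma mem_nbrs mu nu : (nu \in nbrs mu) = ystep mu nu.
Proof. by rewrite mem_cat mem_downs mem_ups orbC. Qed.

Lemma nbrs_sym mu nu : (nu \in nbrs mu) = (mu \in nbrs nu).
Proof. by rewrite !mem_nbrs /ystep orbC. Qed.

Lemma uniq_nbrs mu : uniq (nbrs mu).
Proof.
rewrite cat_uniq uniq_downs uniq_ups andbT /=; apply/hasPn => x.
rewrite mem_ups mem_downs => /psize_cover h1; apply/negP => /psize_cover; lia.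
Qed.

Fixpoint walks l : seq (seq (seq nat)) :=
  if l is l'.+1 then [seq rcons T nu | T <- walks l', nu <- nbrs (last [::] T)]
  else [:: [:: [::]]].

Definition is_walk l (T : seq (seq nat)) :=
  if T is x :: s then [&& x == [::], size s == l & path ystep x s] else false.

Lemma mem_walks l T : (T \in walks l) = is_walk l T.
Proof.
elim: l T => [|l IH] T.
  rewrite inE; case: T => [|x [|y s]] //=; rewrite ?andbF //.
rewrite [walks _]/=; apply/allpairsPdep/idP.
  case=> T' [nu [hT hnu ->]]; move: hT; rewrite IH.
  case: T' hnu => [|x s] //= hnu /and3P [hx hs hp].
  by rewrite hx size_rcons eqSS hs rcons_path hp -mem_nbrs.
case: T => [|x s] //= /and3P [hx hs hp].
case/lastP: s hs hp => [|s nu] //; rewrite size_rcons rcons_path => hs /andP [hp hy].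
exists (x :: s), nu; split => //.
  by rewrite IH /= hx hp andbT.
by rewrite mem_nbrs.
Qed.

Lemma uniq_walks l : uniq (walks l).
Proof.
elim: l => [|l IH] //=.
apply: allpairs_uniq_dep => //; first by move=> T _; apply: uniq_nbrs.
move=> [T1 nu1] [T2 nu2] _ _ /= /rcons_inj [e1 e2]; subst.
by [].
Qed.

Lemma sum_walks l mu (F : seq (seq nat) -> nat) :
  \sum_(T <- walks l.+1 | last [::] T == mu) F T =
  \sum_(rho <- nbrs mu) \sum_(T <- walks l | last [::] T == rho) F (rcons T mu).
Proof.
symmetry; under eq_bigr => rho _ do rewrite big_mkcond; symmetry.
rewrite exchange_big [walks _]/= big_flatten big_map; apply: eq_bigr => T _.
rewrite big_map -big_mkcond /=.
rewrite (eq_bigl (fun nu => nu == mu)); last by move=> nu; rewrite last_rcons.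
rewrite sum_eq_cond count_uniq_mem ?uniq_nbrs // nbrs_sym.
rewrite (eq_bigl (fun rho => rho == last [::] T)); last by move=> rho; rewrite eq_sym.
rewrite (@sum_eq_cond _ _ (fun _ => F (rcons T mu))) count_uniq_mem ?uniq_nbrs //.
Qed.

Definition N l mu := \sum_(T <- walks l | last [::] T == mu) 1.
Definition W l mu := \sum_(T <- walks l | last [::] T == mu) wt T.

Lemma N_rec l mu : N l.+1 mu = \sum_(rho <- nbrs mu) N l rho.
Proof. exact: sum_walks. Qed.

Lemma wt_rcons T mu : wt (rcons T mu) = wt T + psize mu.
Proof. by rewrite /wt map_rcons sumn_rcons. Qed.

Lemma W_rec l mu : W l.+1 mu = \sum_(rho <- nbrs mu) W l rho + psize mu * N l.+1 mu.
Proof.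
rewrite /W sum_walks N_rec big_distrr /= -big_split /=; apply: eq_bigr => rho _.
rewrite /N big_distrr -big_split /=; apply: eq_bigr => T _.
by rewrite wt_rcons muln1.
Qed.

Import GRing.Theory Num.Theory.
Local Open Scope ring_scope.

Fixpoint A (l h : nat) : rat :=
  if l is l'.+1 then (if h is h'.+1 then A l' h' else 0) + h.+1%:R * A l' h.+1
  else (h == 0%N)%:R.
Fixpoint B (l h : nat) : rat :=
  if l is l'.+1 then (if h is h'.+1 then B l' h' else 0) + h.+1%:R * B l' h.+1
    + h%:R * A l h
  else 0.

Lemma Prel l : forall h, (l%:R - h%:R) * A l h = (h.+1%:R * h.+2%:R) * A l h.+2.
Proof.
elim: l => [|l IH] h.
  by case: h => [|h] /=; rewrite ?mulr0 ?mul0r ?subrr.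
case: h => [|h].
  have I1 := IH 1%N.
  rewrite /=; apply/eqP; rewrite -subr_eq0; apply/eqP.
  transitivity ((l%:R - 1%:R) * A l 1 - (2%:R * 3%:R) * A l 3); last by rewrite I1 subrr.
  rewrite add0r; ring.
have I1 := IH h; have I2 := IH h.+2.
rewrite /=; apply/eqP; rewrite -subr_eq0; apply/eqP.
transitivity (((l%:R - h%:R) * A l h - (h.+1%:R * h.+2%:R) * A l h.+2)
  + h.+2%:R * ((l%:R - h.+2%:R) * A l h.+2 - (h.+3%:R * h.+4%:R) * A l h.+4));
  last by rewrite I1 I2 !subrr mulr0 addr0.
ring.
Qed.

Lemma Bclosed l : forall h, B l h = (l.+1%:R * (l%:R + 2%:R * h%:R)) / 6%:R * A l h.
Proof.
elim: l => [|l IH] h.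
  by case: h => [|h] /=; rewrite ?mulr0 ?mul0r.
case: h => [|h].
  rewrite /= IH; ring.
have P := Prel l h.
rewrite /= !IH; apply/eqP; rewrite -subr_eq0; apply/eqP.
transitivity ((-(2%:R/3%:R)) * ((l%:R - h%:R) * A l h - (h.+1%:R * h.+2%:R) * A l h.+2));
  last by rewrite P subrr mulr0.
by field.
Qed.

Lemma Age0 l : forall h, 0 <= A l h.
Proof.
elim: l => [|l IH] h /=; first by case: (h == 0%N).
apply: addr_ge0; first by case: h.
by apply: mulr_ge0.
Qed.

Lemma Apos l : forall h, (h <= l)%N -> ~~ odd (l + h) -> 0 < A l h.
Proof.
elim: l => [|l IH] h.
  by rewrite leqn0 => /eqP -> _ /=.
case: h => [|h] hl ho /=.
  rewrite add0r mulr_gt0 // IH //.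
    by case: l {IH} hl ho.
  by move: ho; rewrite addn1 addn0.
have h1 : 0 < A l h.
  by apply: IH; [lia|move: ho; rewrite addnS /= negbK].
have h2 : 0 <= h.+2%:R * A l h.+2 by apply: mulr_ge0; rewrite ?Age0.
lra.
Qed.

Lemma sum_downs (X : seq nat -> nat) (C : nat -> rat) mu : is_part mu ->
  (forall rho, is_part rho -> (X rho)%:R = C (psize rho) * (g rho)%:R) ->
  (\sum_(rho <- downs mu) X rho)%:R = C (psize mu).-1 * ((0 < psize mu) * g mu)%:R.
Proof.
move=> pm HX; rewrite -G1 // !natr_sum mulr_sumr !big_seq; apply: eq_bigr => rho.
rewrite mem_downs => c; rewrite HX ?(cover_partl c) // (psize_cover c) //.
Qed.

Lemma sum_ups (X : seq nat -> nat) (C : nat -> rat) mu : is_part mu ->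
  (forall rho, is_part rho -> (X rho)%:R = C (psize rho) * (g rho)%:R) ->
  (\sum_(rho <- ups mu) X rho)%:R = C (psize mu).+1 * ((psize mu).+1 * g mu)%:R.
Proof.
move=> pm HX; rewrite -Gups // !natr_sum mulr_sumr !big_seq; apply: eq_bigr => rho.
rewrite mem_ups => c; rewrite HX ?(cover_partr c) // (psize_cover c) //.
Qed.

Lemma main_inv l : forall mu, is_part mu ->
  (N l mu)%:R = A l (psize mu) * (g mu)%:R /\ (W l mu)%:R = B l (psize mu) * (g mu)%:R.
Proof.
elim: l => [|l IH] mu pm.
  rewrite /N /W /= !big_cons !big_nil /=.
  case: (eqVneq [::] mu) => [<-|hm] /=.
    by rewrite /g /= mul1r.
  have hp : psize mu != 0%N by apply/eqP => /(part_psize0 pm) h; rewrite h eqxx in hm.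
  by rewrite (negbTE hp) !mul0r.
have HXN : forall rho, is_part rho -> (N l rho)%:R = A l (psize rho) * (g rho)%:R.
  by move=> rho pr; case: (IH rho pr).
have HXW : forall rho, is_part rho -> (W l rho)%:R = B l (psize rho) * (g rho)%:R.
  by move=> rho pr; case: (IH rho pr).
have HN : (N l.+1 mu)%:R = A l.+1 (psize mu) * (g mu)%:R.
  rewrite N_rec big_cat natrD (sum_downs pm HXN) (sum_ups pm HXN).
  case: (psize mu) => [|h] /=; rewrite !natrM; ring.
split => //.
rewrite W_rec natrD big_cat natrD (sum_downs pm HXW) (sum_ups pm HXW).
rewrite [(psize mu * _)%:R]natrM HN.
case: (psize mu) => [|h] /=; rewrite !natrM; ring.
Qed.

Theorem corollary3 (lam : seq nat) (k n : nat)
  (Hlam : is_part lam) (Hk : psize lam = k)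
  (ts : seq (seq (seq nat))) (Huniq : uniq ts)
  (Hts : forall T, (T \in ts) = is_OT lam (k + 2 * n) T) :
  (\sum_(T <- ts) (wt T)%:R : rat) / ((size ts)%:R * (2 * n + k + 1)%:R)
  = n%:R / 3 + k%:R / 2.
Proof.
set l := (k + 2 * n)%N.
have hp : perm_eq ts [seq T <- walks l | last [::] T == lam].
  apply: uniq_perm => //; first by rewrite filter_uniq ?uniq_walks.
  move=> T; rewrite Hts mem_filter mem_walks.
  case: T => [|x s] /=; first by rewrite andbF.
  by apply/idP/idP => /and4P [h1 h2 h3 h4]; apply/and4P; split.
rewrite (perm_big _ hp) big_filter (perm_size hp) size_filter -sum1_count -natr_sum.
have [HN HW] := main_inv l Hlam.
rewrite -/(N l lam) -/(W l lam) HN HW Bclosed Hk.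
have gp : (0 < g lam)%N by apply: (@gpos (psize lam).+1).
have Ap : 0 < A l k by apply: Apos; rewrite /l; [lia|rewrite (_ : (l + k = (k + n).*2)%N) ?odd_double // /l -addnn; lia].
rewrite /l; rewrite natrD natrM.
have g0 : (g lam)%:R != 0 :> rat by rewrite pnatr_eq0 -lt0n.
have A0 : A (k + 2 * n) k != 0 by exact: (lt0r_neq0 Ap).
field.
rewrite A0 g0 !andbT; apply: lt0r_neq0.
have := ler0n rat n; have := ler0n rat k; lra.
Qed.
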